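(* Let $T$ be a supercritical Galton–Watson tree with finite alphabet $\mathbb{A}$. Let $(\mathscr{A}_k)_{k\in\mathbb{N}}$ be such that each $\mathscr{A}_k$ is a nonempty collection of nonempty subsets of $\mathbb{A}^k$, and define $g_{\mathscr{A}_k}(s)=\mathbb{P}(T_k^{(s)}\notin\overline{\mathscr{A}_k})$ for $s\in[0,1]$. Assume that $g_{\mathscr{A}_k}(s)\to\mathbb{P}(\text{extinction})$ as $k\to\infty$ for every $s\in(0,1)$. Then there is $K\in\mathbb{N}$ such that for every $k>K$, almost surely conditioned on nonextinction, there exist infinitely many vertices $v\in T_{(k)}$ such that the descendants tree $(T_{(k)})^v$ has an $\mathscr{A}_k$-subtree.
   Context: Trees with alphabet $\mathbb{B}$ are prefix-closed subsets of $\mathbb{B}^*$ containing the empty word; $W_S(a)=\{i\in\mathbb{B}:ai\in S\}$; $S^v=\{j:vj\in S\}$; an $\mathscr{A}$-subtree of $S$ is a tree $S'\subseteq S$ with $W_{S'}(a)\in\mathscr{A}$ for all $a\in S'$. The Galton–Watson tree with offspring distribution $W$ (random subset of $\mathbb{A}$ with $\mathbb{P}(i\in W)>0$ for all $i$) is $T_0=\{\emptyset\}$, $T_n=\{aj:a\in T_{n-1},j\in W_a\}$ with independent copies $W_a$; supercritical means $\mathbb{E}|W|>1$; extinction means some $T_n=\emptyset$. The $k$-compressed tree is $T_{(k)}=\bigcup_{n\ge0}T_{kn}$, viewed as a tree with alphabet $\mathbb{A}^k$ (identifying $\mathbb{A}^{kn}$ with $(\mathbb{A}^k)^n$). $\overline{\mathscr{A}}=\{S:\exists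 X\in\mathscr{A},X\subseteq S\}$. $T_k^{(s)}=T_k\cap Y$ with $Y\subseteq\mathbb{A}^k$ independent, $\mathbb{P}(Y=B)=(1-s)^{|B|}s^{|\mathbb{A}^k\setminus B|}$. *)

(* Defs.v *)
From HB Require Import structures.
From mathcomp Require Import all_boot all_order all_algebra.
From mathcomp Require Import all_classical all_reals all_analysis.
Set Implicit Arguments. Unset Strict Implicit. Unset Printing Implicit Defensive.
Import Order.TTheory GRing.Theory Num.Theory.
Local Open Scope classical_set_scope.
Local Open Scope ring_scope.

Section GW.
Variable A : finType.

(** Membership of a word in the Galton-Watson tree determined by the
    offspring sets W : A^* -> {set A}: a = a1...an is in T_n iff
    a_{i+1} \in W_{a1...ai} for all i < n (unfolding T_n = {aj : a in T_{n-1}, j in W_a}). *)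
Fixpoint inGW_from (W : seq A -> {set A}) (p a : seq A) : bool :=
  match a with
  | [::] => true
  | j :: a' => (j \in W p) && inGW_from W (rcons p j) a'
  end.

Definition inGW (W : seq A -> {set A}) (a : seq A) : bool := inGW_from W [::] a.

Definition extinct (W : seq A -> {set A}) : Prop :=
  exists n : nat, forall a : seq A, size a = n -> ~~ inGW W a.

Definition Tgen (W : seq A -> {set A}) (k : nat) : {set k.-tuple A} :=
  [set t : k.-tuple A | inGW W (val t)].

Definition Tcomp (W : seq A -> {set A}) (k : nat) : pred (seq (k.-tuple A)) :=
  fun b => inGW W (flatten (map val b)).
End GW.

Section Trees.
Variable B : finType.

Definition is_tree (S : pred (seq B)) : Prop :=
  S [::] /\ forall (a : seq B) (j : B), S (rcons a j) -> S a.

Definition Wof (S : pred (seq B)) (a : seq B) : {set B} := [set i | S (rcons a i)].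

Definition desc (S : pred (seq B)) (v : seq B) : pred (seq B) := fun j => S (v ++ j).

Definition has_subtree (Aset : {set {set B}}) (S : pred (seq B)) : Prop :=
  exists S' : pred (seq B), is_tree S' /\ (forall a, S' a -> S a) /\
    (forall a, S' a -> Wof S' a \in Aset).

Definition upclosure_mem (Aset : {set {set B}}) (S : {set B}) : bool :=
  [exists X in Aset, X \subset S].
End Trees.

Definition Pr (R : realType) (d : measure_display) (Omega : measurableType d)
  (P : probability Omega R) (E : set Omega) : R := fine (P E).

(** g_{A_k}(s) = P(T_k^{(s)} \notin overline(A_k)), where T_k^{(s)} = T_k \cap Y with Y
    independent of the tree and P(Y = B) = (1-s)^|B| s^|A^k \ B|; by independence of Y
    this is written as the sum over the values B of Y. *)
Definition gfun (R : realType) (d : measure_display) (Omega : measurableType d)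
  (P : probability Omega R) (A : finType) (W : seq A -> Omega -> {set A})
  (k : nat) (Ak : {set {set k.-tuple A}}) (s : R) : R :=
  \sum_(B : {set k.-tuple A})
     (1 - s) ^+ #|B| * s ^+ #|~: B| *
     Pr P [set w | ~~ upclosure_mem Ak (Tgen (fun a => W a w) k :&: B)].

(* Main.v *)
Require Import Defs.
From HB Require Import structures.
From mathcomp Require Import all_boot all_order all_algebra.
From mathcomp Require Import all_classical all_reals all_analysis.
From mathcomp Require Import ring lra.
Import Order.TTheory GRing.Theory Num.Theory numFieldNormedType.Exports.
Local Open Scope classical_set_scope.
Local Open Scope ring_scope.
Set Implicit Arguments. Unset Strict Implicit. Unset Printing Implicit Defensive.

Section Words.
Variable A : finType.
Implicit Types (f g : seq A -> {set A}) (p a c t : seq A).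

Definition shiftf f a : seq A -> {set A} := fun c => f (a ++ c).

Lemma inGW_from_cat f p x y :
  inGW_from f p (x ++ y) = inGW_from f p x && inGW_from f (p ++ x) y.
Proof.
elim: x p => [|j x IH] p /=; first by rewrite cats0.
by rewrite IH andbA cat_rcons.
Qed.

Lemma inGW_from_shift f a p t :
  inGW_from f (a ++ p) t = inGW_from (shiftf f a) p t.
Proof.
elim: t p => [|j t IH] p //=.
by rewrite rcons_cat IH.
Qed.

Lemma inGW_from_dep f g p t :
  (forall c, (size c < size t)%N -> f (p ++ c) = g (p ++ c)) ->
  inGW_from f p t = inGW_from g p t.
Proof.
elim: t p => [|j t IH] p //= H.
have -> : f p = g p by have := H [::] isT; rewrite cats0.
congr (_ && _); apply: IH => c Hc.
by rewrite -cats1 -catA H //= size_cat /= addn1 ltnS.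
Qed.

Variable k : nat.
Variable Ak : {set {set k.-tuple A}}.

Fixpoint Ek f n a : bool :=
  match n with
  | 0 => true
  | n'.+1 => [exists X in Ak, [forall t in X,
                inGW_from f a (val t) && Ek f n' (a ++ val t)]]
  end.

Lemma Ek_mono f n a : Ek f n.+1 a -> Ek f n a.
Proof.
elim: n a => [|n IH] a //=.
case/existsP=> X /andP[XA /forallP H]; apply/existsP; exists X.
rewrite XA /=; apply/forallP=> t; apply/implyP=> tX.
by have /implyP/(_ tX)/andP[-> /IH] := H t.
Qed.

Lemma Ek_monoW f n m a : (n <= m)%N -> Ek f m a -> Ek f n a.
Proof.
move=> nm; elim: m nm => [|m IH]; first by rewrite leqn0 => /eqP->.
rewrite leq_eqVlt => /orP[/eqP->//|]; rewrite ltnS => nm H.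
by apply: IH nm (Ek_mono H).
Qed.

Lemma Ek_dep f g n a :
  (forall c, (size c < n * k)%N -> f (a ++ c) = g (a ++ c)) ->
  Ek f n a = Ek g n a.
Proof.
elim: n a => [|n IH] a H //=.
apply: eq_existsb => X; congr (_ && _); apply: eq_forallb => t.
congr (_ ==> _); congr (_ && _).
  apply: inGW_from_dep => c Hc; apply: H.
  by apply: (leq_trans Hc); rewrite size_tuple mulSn leq_addr.
apply: IH => c Hc; rewrite -catA; apply: H.
by rewrite size_cat size_tuple mulSn ltn_add2l.
Qed.

Lemma Ek_shift f n a : Ek f n a = Ek (shiftf f a) n [::].
Proof.
elim: n f a => [|n IH] f a //=.
apply: eq_existsb => X; congr (_ && _); apply: eq_forallb => t.
congr (_ ==> _); congr (_ && _).
  by rewrite -inGW_from_shift cats0.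
rewrite IH [in RHS]IH /=; congr Ek.
by rewrite /shiftf; apply: funext => c /=; rewrite catA.
Qed.

Definition good f a := forall n, Ek f n a.

Lemma fin_unif (T : eqType) (Q : nat -> T -> bool) (r : seq T) :
  (forall n m x, (n <= m)%N -> Q n x -> Q m x) ->
  (forall x, x \in r -> exists n, Q n x) -> exists n, forall x, x \in r -> Q n x.
Proof.
move=> mono; elim: r => [|x r IH] H; first by exists 0%N.
have [n Hn] := H x (mem_head _ _).
have [m Hm] : exists m, forall y, y \in r -> Q m y.
  by apply: IH => y yr; apply: H; rewrite inE yr orbT.
exists (maxn n m) => y; rewrite inE => /orP[/eqP->|yr].
  by apply: mono Hn; rewrite leq_maxl.
by apply: mono (Hm y yr); rewrite leq_maxr.
Qed.

Lemma good_step f a : good f a ->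
  exists2 X, X \in Ak & forall t : k.-tuple A, t \in X -> inGW_from f a (val t) /\ good f (a ++ val t).
Proof.
move=> G.
pose Q n X := (X \in Ak) && [forall t in X, inGW_from f a (val t) && Ek f n (a ++ val t)].
have Qmono : forall n m X, (n <= m)%N -> Q m X -> Q n X.
  move=> n m X nm; rewrite /Q => /andP[-> /forallP H] /=; apply/forallP=> t; apply/implyP=> tX.
  by have /implyP/(_ tX)/andP[-> /(Ek_monoW nm)] := H t.
apply: contrapT => Hn.
have H1 : forall X, X \in enum [set: {set k.-tuple A}] -> exists n, ~~ Q n X.
  move=> X _; apply: contrapT => HX; apply: Hn; exists X.
    apply: contrapT => XA; apply: HX; exists 0%N; by rewrite /Q (negbTE (introN idP XA)).
  move=> t tX; have HQ : forall n, Q n X by move=> n; apply: contrapT => /negP ?; apply: HX; exists n.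
  split; first by have /andP[_ /forallP/(_ t)/implyP/(_ tX)/andP[]] := HQ 0%N.
  by move=> n; have /andP[_ /forallP/(_ t)/implyP/(_ tX)/andP[]] := HQ n.
have [N HN] := fin_unif (Q := fun n X => ~~ Q n X)
   (fun n m X nm => contra (Qmono n m X nm)) H1.
have := G N.+1 => /= /existsP[X XQ].
by have := HN X; rewrite mem_enum in_setT => /(_ isT); rewrite /Q XQ.
Qed.

Fixpoint okpath (Xc : seq A -> {set k.-tuple A}) p (b : seq (k.-tuple A)) : bool :=
  match b with
  | [::] => true
  | t :: b' => (t \in Xc p) && okpath Xc (p ++ val t) b'
  end.

Lemma okpath_rcons Xc p (b : seq (k.-tuple A)) (t : k.-tuple A) :
  okpath Xc p (rcons b t) = okpath Xc p b && (t \in Xc (p ++ flatten (map val b))).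
Proof.
elim: b p => [|u b IH] p /=; first by rewrite cats0 andbT.
by rewrite IH andbA catA.
Qed.

Lemma good_subtree f a : good f a ->
  has_subtree Ak (fun b : seq (k.-tuple A) => inGW_from f a (flatten (map val b))).
Proof.
move=> G.
have step : forall p, exists X : {set k.-tuple A}, good f p ->
   X \in Ak /\ forall t : k.-tuple A, t \in X -> inGW_from f p (val t) /\ good f (p ++ val t).
  move=> p; case: (pselect (good f p)) => gp.
    by have [X XA HX] := good_step gp; exists X.
  by exists finset.set0.
have [Xc HXc] := choice step.
exists (okpath Xc a); split; [split=> // b t; rewrite okpath_rcons => /andP[]//|].
have inv : forall b p, good f p -> okpath Xc p b ->
    inGW_from f p (flatten (map val b)) /\ good f (p ++ flatten (map val b)).
  elim=> [|t b IH] p gp /=; first by rewrite cats0.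
  case/andP=> tX ok; have [_ /(_ t tX)[h1 h2]] := HXc p gp.
  have [h3 h4] := IH _ h2 ok.
  by rewrite inGW_from_cat h1 h3 catA.
split=> b ok; first by case: (inv b a G ok).
have [_ gb] := inv b a G ok.
have [XA _] := HXc _ gb.
rewrite /Wof; suff -> : [set i | okpath Xc a (rcons b i)]%SET = Xc (a ++ flatten (map val b)) by [].
by apply/setP=> t; rewrite inE okpath_rcons ok.
Qed.

Lemma desc_Tcomp f (v j : seq (k.-tuple A)) :
  desc (@Tcomp A f k) v j = @Tcomp A f k v && inGW_from f (flatten (map val v)) (flatten (map val j)).
Proof. by rewrite /desc /Tcomp /inGW map_cat flatten_cat inGW_from_cat. Qed.

Lemma split_word (L : nat) (a : seq A) : size a = (k * L)%N ->
  exists v : seq (k.-tuple A), size v = L /\ flatten (map val v) = a.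
Proof.
elim: L a => [|L IH] a Ha.
  by exists [::]; move: Ha; rewrite muln0 => /size0nil ->.
have sz : size (take k a) == k by rewrite size_take Ha mulnS; case: ifP => // /negbT; rewrite -leqNgt leq_eqVlt ltnNge leq_addr orbF.
have [v [sv fv]] : exists v : seq (k.-tuple A), size v = L /\ flatten (map val v) = drop k a.
  by apply: IH; rewrite size_drop Ha mulnS addKn.
exists (Tuple sz :: v); split; first by rewrite /= sv.
by rewrite /= fv cat_take_drop.
Qed.

Lemma inGW_prefix f a n : inGW f a -> (n <= size a)%N -> inGW f (take n a).
Proof.
rewrite /inGW -{1}(cat_take_drop n a) inGW_from_cat; by case/andP.
Qed.

End Words.


Section Prob.
Variables (R : realType) (d : measure_display) (Omega : measurableType d)
  (P : probability Omega R).

Lemma PrE E : measurable E -> P E = (Pr P E)%:E.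
Proof. by move=> mE; rewrite /Pr fineK // fin_num_measure. Qed.

Lemma Pr_ge0 E : 0 <= Pr P E.
Proof. by rewrite /Pr; apply: fine_ge0; apply: measure_ge0. Qed.

Lemma Pr_le1 E : measurable E -> Pr P E <= 1.
Proof.
move=> mE; have := probability_le1 P mE; rewrite PrE // lee_fin //.
Qed.

Lemma Pr_setT : Pr P setT = 1.
Proof. by rewrite /Pr probability_setT. Qed.

Lemma Pr_set0 : Pr P set0 = 0.
Proof. by rewrite /Pr measure0. Qed.

Lemma Pr_le E F : measurable E -> measurable F -> E `<=` F -> Pr P E <= Pr P F.
Proof.
move=> mE mF EF; rewrite -lee_fin -!PrE //.
exact: (le_measure P (mem_set mE) (mem_set mF) EF).
Qed.

Lemma PrU E F : measurable E -> measurable F -> E `&` F = set0 ->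
  Pr P (E `|` F) = Pr P E + Pr P F.
Proof.
move=> mE mF EF; apply: EFin_inj; rewrite EFinD -!PrE //; last exact: measurableU.
exact: (measureU P mE mF EF).
Qed.

Lemma Pr_ext E F : E = F -> Pr P E = Pr P F.
Proof. by move->. Qed.

Lemma Pr_partition (V : finType) (Z : Omega -> V) (H : set Omega) :
  (forall v, measurable [set w | Z w = v]) -> measurable H ->
  Pr P H = \sum_(v : V) Pr P (H `&` [set w | Z w = v]).
Proof.
move=> mZ mH.
have gen : forall r : seq V, uniq r ->
  Pr P (H `&` [set w | Z w \in r]) = \sum_(v <- r) Pr P (H `&` [set w | Z w = v]).
  elim=> [|v r IH] /=.
    move=> _; rewrite big_nil -Pr_set0; congr Pr.
    by apply/seteqP; split=> w //= [].
  case/andP=> vr ur; rewrite big_cons -IH //.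
  have mr : forall r : seq V, measurable [set w | Z w \in r].
    elim=> [|u r' IH']; first by rewrite (_ : [set w | _] = set0) //; apply/seteqP; split=> w.
    rewrite (_ : [set w | _] = [set w | Z w = u] `|` [set w | Z w \in r']); first exact: measurableU.
    apply/seteqP; split=> w /=.
      by rewrite inE => /orP[/eqP|]; [left|right].
    by case=> [->|Hw]; rewrite inE ?eqxx ?Hw ?orbT.
  rewrite -PrU; first (congr Pr; apply/seteqP; split=> w /=).
  - by case=> Hw; rewrite inE => /orP[/eqP|] Zw; [left|right].
  - by case=> -[Hw Zw]; split=> //; rewrite inE ?Zw ?eqxx ?orbT.
  - exact: measurableI.
  - exact: measurableI.
  - apply/seteqP; split=> w //= [[_ ->] [_]]; by rewrite (negbTE vr).
rewrite -big_enum /= -gen ?enum_uniq //; congr Pr.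
by apply/seteqP; split=> w /=; [move=> Hw; split=> //; rewrite mem_enum|case].
Qed.

Lemma meas_fin (V : finType) (Z : Omega -> V) (Q : pred V) :
  (forall v, measurable [set w | Z w = v]) -> measurable [set w | Q (Z w)].
Proof.
move=> mZ.
have gen : forall r : seq V, measurable [set w | (Z w \in r) && Q (Z w)].
  elim=> [|u r IH]; first by rewrite (_ : [set w | _] = set0) //; apply/seteqP; split=> w.
  case Qu: (Q u).
    rewrite (_ : [set w | _] = [set w | Z w = u] `|` [set w | (Z w \in r) && Q (Z w)]); first exact: measurableU.
    apply/seteqP; split=> w /=; rewrite inE.
      by case/andP=> /orP[/eqP|] H1 H2; [left|right; rewrite H1].
    by case=> [->|/andP[-> ->]]; rewrite ?eqxx ?Qu ?orbT.
  rewrite (_ : [set w | _] = [set w | (Z w \in r) && Q (Z w)]) //.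
  apply/seteqP; split=> w /=; rewrite inE.
    case/andP=> /orP[/eqP Zu|wr] Qw; first by move: Qu; rewrite -Zu Qw.
    by rewrite wr Qw.
  by case/andP=> -> ->; rewrite orbT.
rewrite (_ : [set w | _] = [set w | (Z w \in enum V) && Q (Z w)]) //.
by apply/seteqP; split=> w /=; rewrite mem_enum.
Qed.

Lemma Pr_compl E : measurable E -> Pr P (~` E) = 1 - Pr P E.
Proof.
move=> mE; apply: EFin_inj; rewrite EFinB -!PrE //; last exact: measurableC.
exact: (probability_setC P mE).
Qed.

Variable A : finType.
Variable W : seq A -> Omega -> {set A}.
Hypothesis Wmeas : forall (a : seq A) (X : {set A}), measurable [set w | W a w = X].
Hypothesis Wid : forall (a : seq A) (X : {set A}),
      P [set w | W a w = X] = P [set w | W [::] w = X].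
Hypothesis Windep : forall (s : seq (seq A)) (Xs : seq A -> {set A}), uniq s ->
      Pr P [set w | all (fun a => W a w == Xs a) s] =
      \prod_(a <- s) Pr P [set w | W a w = Xs a].

Definition Wf w : seq A -> {set A} := fun a => W a w.
Definition mu (X : {set A}) : R := Pr P [set w | W [::] w = X].
Definition dep (Phi : (seq A -> {set A}) -> bool) (S : seq (seq A)) :=
  forall f g, (forall a, a \in S -> f a = g a) -> Phi f = Phi g.
Definition env (S : seq (seq A)) (x : seq {set A}) : seq A -> {set A} :=
  fun a => nth finset.set0 x (index a S).
Definition atom (S : seq (seq A)) (Xs : seq A -> {set A}) : set Omega :=
  [set w | all (fun a => W a w == Xs a) S].
Definition evt (Phi : (seq A -> {set A}) -> bool) : set Omega := [set w | Phi (Wf w)].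

Lemma atom_meas S Xs : measurable (atom S Xs).
Proof.
elim: S => [|a S IH].
  by rewrite /atom (_ : [set w | _] = setT) //; apply/seteqP; split=> w.
rewrite /atom (_ : [set w | _] = [set w | W a w = Xs a] `&` atom S Xs); first exact: measurableI.
by apply/seteqP; split=> w /=; [case/andP=> /eqP|case=> -> ]; rewrite ?eqxx.
Qed.

Lemma Pr_atom S Xs : uniq S -> Pr P (atom S Xs) = \prod_(a <- S) mu (Xs a).
Proof.
move=> uS; rewrite /atom Windep //; apply: eq_bigr => a _.
by rewrite /mu /Pr Wid.
Qed.

Definition Zt (m : nat) (S : seq (seq A)) (w : Omega) : m.-tuple {set A} :=
  insubd [tuple of nseq m finset.set0] (map (fun a => W a w) S).

Lemma Zt_eq m S (x : m.-tuple {set A}) : uniq S -> size S = m ->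
  [set w | Zt m S w = x] = atom S (env S x).
Proof.
move=> uS sS; apply/seteqP; split=> w /=.
  move=> <-; apply/allP=> a aS; rewrite /env /Zt val_insubd size_map sS eqxx.
  by rewrite (nth_map [::]) ?index_mem // nth_index.
move=> /allP H; apply: val_inj; rewrite /Zt val_insubd size_map sS eqxx /=.
apply: (@eq_from_nth _ finset.set0); first by rewrite size_map size_tuple.
move=> i; rewrite size_map => iS; rewrite (nth_map [::]) //.
have := H _ (mem_nth [::] iS) => /eqP ->; by rewrite /env index_uniq.
Qed.

Lemma Zt_meas m S (x : m.-tuple {set A}) : uniq S -> size S = m ->
  measurable [set w | Zt m S w = x].
Proof. by move=> uS sS; rewrite Zt_eq //; apply: atom_meas. Qed.

Lemma env_agree S (x : seq {set A}) w : uniq S -> w \in atom S (env S x) ->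
  forall a, a \in S -> Wf w a = env S x a.
Proof. by move=> uS; rewrite inE => /allP H a aS; apply/eqP/H. Qed.

Lemma dep_meas Phi S : uniq S -> dep Phi S -> measurable (evt Phi).
Proof.
move=> uS dP.
rewrite (_ : evt Phi = [set w | (fun x : (size S).-tuple {set A} => Phi (env S x)) (Zt (size S) S w)]).
  exact: (@meas_fin _ (Zt (size S) S) (fun x => Phi (env S x)) (fun v => Zt_meas v uS erefl)).
apply/seteqP; split=> w /=; rewrite /evt /=;
  rewrite (dP (Wf w) (env S (Zt (size S) S w))) //;
  apply: env_agree => //; by rewrite inE -/(atom _ _) -Zt_eq.
Qed.

Lemma Pr_split_atom m S Phi H : uniq S -> size S = m -> dep Phi S -> measurable H ->
  Pr P (evt Phi `&` H) =
  \sum_(x : m.-tuple {set A}) (Phi (env S x))%:R * Pr P (atom S (env S x) `&` H).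
Proof.
move=> uS sS dP mH.
rewrite (Pr_partition (Z := Zt m S)); last first.
  by apply: measurableI => //; apply: dep_meas dP.
  by move=> v; apply: Zt_meas.
apply: eq_bigr => x _; rewrite Zt_eq //.
case Px: (Phi (env S x)); rewrite ?mul1r ?mul0r.
  congr Pr; apply/seteqP; split=> w /=; first by case=> -[].
  move=> [aw Hw]; split=> //; split=> //.
  by rewrite /evt /= (dP _ (env S x)) ?Px //; apply: env_agree; rewrite // inE.
rewrite -Pr_set0; congr Pr; apply/seteqP; split=> w //= [[Pw _] aw].
by move: Pw; rewrite /evt /= (dP _ (env S x)) ?Px //; apply: env_agree; rewrite // inE.
Qed.

Lemma Pr_dep m S Phi : uniq S -> size S = m -> dep Phi S ->
  Pr P (evt Phi) =
  \sum_(x : m.-tuple {set A}) (Phi (env S x))%:R * \prod_(a <- S) mu (env S x a).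
Proof.
move=> uS sS dP.
rewrite (_ : evt Phi = evt Phi `&` setT); last by rewrite setIT.
rewrite (Pr_split_atom (H := setT) uS sS dP) //; apply: eq_bigr => x _.
by rewrite setIT Pr_atom.
Qed.

Lemma cat_inj (a : seq A) : injective (cat a).
Proof. by move=> x y /eqP; rewrite eqseq_cat // eqxx /= => /eqP. Qed.

Lemma Pr_shift S Phi a : uniq S -> dep Phi S ->
  Pr P (evt (fun f => Phi (fun c => f (a ++ c)))) = Pr P (evt Phi).
Proof.
move=> uS dP.
have uS' : uniq (map (cat a) S) by rewrite map_inj_uniq //; apply: cat_inj.
have dP' : dep (fun f => Phi (fun c => f (a ++ c))) (map (cat a) S).
  move=> f g H; apply: dP => c cS; apply: H; by rewrite map_f.
rewrite (Pr_dep (m := size S) uS' _ dP') ?size_map // (Pr_dep uS erefl dP).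
apply: eq_bigr => x _.
have E : forall c, env (map (cat a) S) x (a ++ c) = env S x c.
  by move=> c; rewrite /env index_map //; apply: cat_inj.
by rewrite big_map; under eq_bigr do rewrite E; congr (_ * _); congr (_%:R); congr Phi; apply: funext.
Qed.

Lemma Pr_indep2 S S' Phi Psi : uniq S -> uniq S' ->
  (forall a, a \in S -> a \notin S') -> dep Phi S -> dep Psi S' ->
  Pr P (evt (fun f => Phi f && Psi f)) = Pr P (evt Phi) * Pr P (evt Psi).
Proof.
move=> uS uS' dis dP dQ.
have dPQ : dep (fun f => Phi f && Psi f) (S ++ S').
  move=> f g H; congr andb; [apply: dP|apply: dQ] => a aS; apply: H; by rewrite mem_cat aS ?orbT.
have -> : evt (fun f => Phi f && Psi f) = evt Phi `&` evt Psi.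
  by apply/seteqP; split=> w /=; rewrite /evt /= => /andP.
rewrite (Pr_split_atom (m := size S) uS erefl dP); last exact: dep_meas dQ.
rewrite (Pr_dep uS erefl dP) big_distrl /=; apply: eq_bigr => x _.
rewrite -mulrA; congr (_ * _).
rewrite setIC (Pr_split_atom (m := size S') uS' erefl dQ); last exact: atom_meas.
rewrite (Pr_dep uS' erefl dQ) big_distrr /=; apply: eq_bigr => y _.
rewrite mulrCA; congr (_ * _).
pose mix a := if a \in S then env S x a else env S' y a.
have -> : atom S' (env S' y) `&` atom S (env S x) = atom (S ++ S') mix.
  apply/seteqP; split=> w; rewrite /atom /= all_cat.
    case=> /allP H1 /allP H2; apply/andP; split; apply/allP=> a aS; rewrite /mix.
      by rewrite aS; apply: H2.
    by rewrite (negbTE (introN idP (fun h => (negP (dis a h)) aS))); apply: H1.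
  case/andP=> /allP H1 /allP H2; split; apply/allP=> a aS.
    by have := H2 a aS; rewrite /mix (negbTE (introN idP (fun h => (negP (dis a h)) aS))).
  by have := H1 a aS; rewrite /mix aS.
rewrite Pr_atom; last by rewrite cat_uniq uS uS' andbT; apply/hasPn=> a aS'; apply/negP=> aS; move: (dis a aS); rewrite aS'.
rewrite big_cat /=; congr (_ * _); apply: eq_big_seq => a aS; rewrite /mix ?aS //.
by rewrite (negbTE (introN idP (fun h => (negP (dis a h)) aS))).
Qed.

Lemma Pr_indep_list (I : eqType) (r : seq I) (Phi : I -> (seq A -> {set A}) -> bool)
  (S : I -> seq (seq A)) : uniq r -> (forall i, uniq (S i)) -> (forall i, dep (Phi i) (S i)) ->
  (forall i j a, i \in r -> j \in r -> i != j -> a \in S i -> a \notin S j) ->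
  Pr P (evt (fun f => all (fun i => Phi i f) r)) = \prod_(i <- r) Pr P (evt (Phi i)).
Proof.
elim: r => [|i r IH] /=.
  move=> _ _ _ _; rewrite big_nil -Pr_setT; congr Pr; by apply/seteqP; split=> w.
case/andP=> ir ur uS dP dis.
rewrite big_cons -IH //; last by move=> i' j a i'r jr; apply: dis; rewrite inE ?i'r ?jr orbT.
apply: (Pr_indep2 (S := S i) (S' := undup (flatten (map S r))) (Psi := fun f => all (Phi^~ f) r)).
- exact: uS.
- exact: undup_uniq.
- move=> a ai; rewrite mem_undup; apply/flattenP => -[s /mapP[j jr ->] aj].
  have := dis i j a (mem_head _ _); rewrite inE jr orbT => /(_ isT).
  have ij : i != j by apply/eqP=> ij; move: ir; rewrite ij jr.
  by move=> /(_ ij ai); rewrite aj.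
- exact: dP.
- move=> f g H; apply: eq_in_all => j jr; apply: (dP j) => a aj; apply: H.
  by rewrite mem_undup; apply/flattenP; exists (S j) => //; exact: map_f.
Qed.

End Prob.


Section Weights.
Variable R : realType.
Variable T : finType.

Definition wt (sg : T -> R) (D : {set T}) : R :=
  \prod_(t : T) (if t \in D then 1 - sg t else sg t).
Definition Fw (sg : T -> R) (phi : {set T} -> R) : R :=
  \sum_(D : {set T}) wt sg D * phi D.

Definition in01 (sg : T -> R) := forall t, 0 <= sg t <= 1.

Lemma wt_ge0 sg D : in01 sg -> 0 <= wt sg D.
Proof.
move=> H; apply: prodr_ge0 => t _; have /andP[h0 h1] := H t.
by case: ifP => _ //; rewrite subr_ge0.
Qed.

Lemma wt_split sg u D :
  wt sg D = (if u \in D then 1 - sg u else sg u) *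
            \prod_(t | t != u) (if t \in D then 1 - sg t else sg t).
Proof. by rewrite /wt (bigD1 u). Qed.

Lemma Fw_coord sg sg' u (phi : {set T} -> R) : in01 sg -> in01 sg' ->
  (forall t, t != u -> sg t = sg' t) -> sg u <= sg' u ->
  (forall D D' : {set T}, D \subset D' -> phi D' <= phi D) ->
  Fw sg phi <= Fw sg' phi.
Proof.
move=> H01 H01' same le anti.
pose kap (D : {set T}) := \prod_(t | t != u) (if t \in D then 1 - sg t else sg t).
have kap' : forall D : {set T}, \prod_(t | t != u) (if t \in D then 1 - sg' t else sg' t) = kap D.
  by move=> D; apply: eq_bigr => t tu; rewrite same.
have kapU : forall D : {set T}, kap (u |: D) = kap D.
  move=> D; apply: eq_bigr => t tu; by rewrite in_setU1 (negbTE tu).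
have kge0 : forall D : {set T}, 0 <= kap D.
  move=> D; apply: prodr_ge0 => t _; have /andP[h0 h1] := H01 t.
  by case: ifP => _ //; rewrite subr_ge0.
have expand : forall s0 : T -> R, (forall D : {set T}, \prod_(t | t != u) (if t \in D then 1 - s0 t else s0 t) = kap D) ->
   Fw s0 phi = \sum_(D : {set T} | u \notin D) kap D * (phi (u |: D) + s0 u * (phi D - phi (u |: D))).
  move=> s0 hk; rewrite /Fw (bigID (fun D : {set T} => u \in D)) /=.
  rewrite (reindex_onto (fun D => u |: D) (fun D => D :\ u)) /=; last first.
    by move=> D uD; rewrite finset.setD1K.
  rewrite (eq_bigl (fun j : {set T} => u \notin j)); last first.
    move=> D; rewrite finset.in_setU1 eqxx /=; apply/eqP/idP.
      by move=> <-; rewrite finset.in_setD1 eqxx.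
    by move=> uD; rewrite finset.setU1K.
  rewrite -big_split /=; apply: eq_bigr.
  move=> D uD; rewrite !(wt_split _ u) !hk kapU finset.in_setU1 eqxx /= (negbTE uD).
  ring.
rewrite (expand sg) // (expand sg') //.
apply: ler_sum => D uD; apply: ler_wpM2l => //.
rewrite lerD2l; apply: ler_wpM2r => //.
by rewrite subr_ge0; apply: anti; apply: finset.subsetUr.
Qed.

Lemma Fw_mono sg tau (phi : {set T} -> R) : in01 sg -> in01 tau -> (forall t, sg t <= tau t) ->
  (forall D D' : {set T}, D \subset D' -> phi D' <= phi D) ->
  Fw sg phi <= Fw tau phi.
Proof.
move=> Hs Ht le anti.
pose mix (r : seq T) t := if t \in r then tau t else sg t.
have mix01 : forall r, in01 (mix r).
  by move=> r t; rewrite /mix; case: ifP.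
have gen : forall r, Fw sg phi <= Fw (mix r) phi.
  elim=> [|u r IH].
    by rewrite (_ : mix [::] = sg) //; apply: funext => t.
  apply: (le_trans IH); apply: (Fw_coord (u := u)) => //.
    by move=> t tu; rewrite /mix inE (negbTE tu).
  rewrite /mix inE eqxx /=; case: ifP => // _.
apply: (le_trans (gen (enum T))).
by rewrite (_ : mix (enum T) = tau) //; apply: funext => t; rewrite /mix mem_enum.
Qed.

Lemma wt_one D : wt (fun _ => 1) D = (D == finset.set0)%:R.
Proof.
rewrite /wt subrr; case: eqP => [->|/eqP /set0Pn [t tD]].
  by rewrite big1 // => t _; rewrite inE.
by rewrite (bigD1 t) //= tD mul0r.
Qed.

Lemma sum_wt sg : in01 sg -> \sum_(D : {set T}) wt sg D = 1.
Proof.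
move=> Hs.
have c1 : in01 (fun _ => 1) by move=> t; rewrite ler01 lexx.
have h1 := Fw_mono (phi := fun _ => 1) Hs c1 (fun t => proj2 (andP (Hs t))) (fun _ _ _ => lexx _).
have h2 := Fw_mono (phi := fun _ => -1) Hs c1 (fun t => proj2 (andP (Hs t))) (fun _ _ _ => lexx _).
have e1 : Fw (fun _ => 1) (fun _ => 1) = 1.
  rewrite /Fw (bigD1 finset.set0) //= wt_one eqxx mulr1 big1 ?addr0 // => D /negbTE DN.
  by rewrite wt_one DN mul0r.
have : Fw sg (fun _ => 1) = \sum_D wt sg D by apply: eq_bigr => D _; rewrite mulr1.
have : Fw sg (fun _ => -1) = - \sum_D wt sg D by rewrite /Fw -sumrN; apply: eq_bigr => D _; rewrite /= mulrN1.
have : Fw (fun _ => 1) (fun _ => -1) = - Fw (fun _ => 1) (fun _ => 1).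
  rewrite /Fw -sumrN; apply: eq_bigr => D _; by rewrite /= mulrN1 mulr1.
move=> e4 e2 e3; move: h1 h2; rewrite e4 e1 e2 e3; lra.
Qed.

Lemma wt_const (s : R) D : wt (fun _ => s) D = (1 - s) ^+ #|D| * s ^+ #|~: D|.
Proof.
rewrite /wt (bigID (mem D)) /=.
congr (_ * _).
  rewrite -prodr_const; apply: eq_big => t //= tD; by rewrite tD.
rewrite -prodr_const; apply: eq_big => t /=; first by rewrite finset.in_setC.
by move/negbTE ->.
Qed.

End Weights.


Section WordsEnum.
Variable A : finType.
Fixpoint allw (n : nat) : seq (seq A) :=
  match n with
  | 0 => [:: [::]]
  | n'.+1 => [seq x :: c | x <- enum A, c <- allw n']
  end.

Lemma mem_allw n c : (c \in allw n) = (size c == n).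
Proof.
elim: n c => [|n IH] c /=.
  by rewrite inE; case: c.
apply/allpairsP/idP.
  by case=> -[x c'] [_ /=]; rewrite IH => /eqP <- ->.
case: c => // x c /=; rewrite eqSS => Hc.
by exists (x, c); rewrite /= mem_enum IH Hc.
Qed.

Definition wsl (N : nat) : seq (seq A) := undup (flatten [seq allw i | i <- iota 0 N]).

Lemma mem_wsl N c : (c \in wsl N) = (size c < N)%N.
Proof.
rewrite mem_undup; apply/flattenP/idP.
  by case=> s /mapP[i]; rewrite mem_iota add0n => /andP[_ iN] -> ; rewrite mem_allw => /eqP ->.
move=> cN; exists (allw (size c)); last by rewrite mem_allw.
by apply/mapP; exists (size c) => //; rewrite mem_iota add0n.
Qed.

Lemma wsl_uniq N : uniq (wsl N).
Proof. exact: undup_uniq. Qed.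
End WordsEnum.
Arguments wsl {A} N.
Arguments allw {A} n.

Section GWProb.
Variables (R : realType) (d : measure_display) (Omega : measurableType d)
  (P : probability Omega R) (A : finType) (W : seq A -> Omega -> {set A}).
Hypothesis Wmeas : forall (a : seq A) (X : {set A}), measurable [set w | W a w = X].
Hypothesis Wid : forall (a : seq A) (X : {set A}),
      P [set w | W a w = X] = P [set w | W [::] w = X].
Hypothesis Windep : forall (s : seq (seq A)) (Xs : seq A -> {set A}), uniq s ->
      Pr P [set w | all (fun a => W a w == Xs a) s] =
      \prod_(a <- s) Pr P [set w | W a w = Xs a].

Local Notation ev := (evt W).
Local Notation PR := (Pr P).

Definition depN (Phi : (seq A -> {set A}) -> bool) (N : nat) :=
  forall f g, (forall c, (size c < N)%N -> f c = g c) -> Phi f = Phi g.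

Lemma depN_dep Phi N : depN Phi N -> dep Phi (wsl N).
Proof. by move=> H f g Hfg; apply: H => c cN; apply: Hfg; rewrite mem_wsl. Qed.

Lemma depN_meas Phi N : depN Phi N -> measurable (ev Phi).
Proof. by move=> H; apply: (dep_meas Wmeas (S := wsl N)) => //; [apply: wsl_uniq|apply: depN_dep]. Qed.

Lemma depN_le Phi N M : (N <= M)%N -> depN Phi N -> depN Phi M.
Proof. by move=> NM H f g Hfg; apply: H => c cN; apply: Hfg; apply: leq_trans NM. Qed.

Lemma ev_ext Phi Psi : (forall f, Phi f = Psi f) -> ev Phi = ev Psi.
Proof. by move=> H; rewrite /evt; apply/seteqP; split=> w /=; rewrite H. Qed.

Lemma evC Phi : ev (fun f => ~~ Phi f) = ~` ev Phi.
Proof. by apply/seteqP; split=> w /=; rewrite /evt /= => /negP. Qed.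

Lemma Pr_sumZ (V : finType) (Zf : (seq A -> {set A}) -> V) (Q : pred V) N :
  (forall f g, (forall c, (size c < N)%N -> f c = g c) -> Zf f = Zf g) ->
  PR (ev (fun f => Q (Zf f))) = \sum_(v : V) (Q v)%:R * PR (ev (fun f => Zf f == v)).
Proof.
move=> dZ.
have dv : forall v, depN (fun f => Zf f == v) N by move=> v f g H; rewrite (dZ f g H).
rewrite (Pr_partition P (Z := fun w => Zf (Wf W w))); last first.
- by apply: (depN_meas (N := N)) => f g H; rewrite (dZ f g H).
- move=> v; rewrite (_ : [set w | _] = ev (fun f => Zf f == v)); first exact: depN_meas (dv v).
  by apply/seteqP; split=> w /=; rewrite /evt /= => /eqP.
apply: eq_bigr => v _; case Qv: (Q v); rewrite ?mul1r ?mul0r.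
  congr Pr; apply/seteqP; split=> w /=; rewrite /evt /=; first by case=> _ ->.
  by move=> /eqP Zv; split; rewrite ?Zv.
rewrite -(Pr_set0 P); congr Pr; apply/seteqP; split=> w //=; rewrite /evt /=.
by case=> + Zv; rewrite Zv Qv.
Qed.

Lemma depN_Tgen l (Q : pred {set l.-tuple A}) : depN (fun f => Q (Tgen f l)) l.
Proof.
move=> f g H; congr Q; apply/setP=> t; rewrite !inE /inGW.
by apply: inGW_from_dep => c; rewrite size_tuple => /H.
Qed.

Variable k : nat.
Variable Ak : {set {set k.-tuple A}}.

Definition xn (n : nat) : R := PR (ev (fun f => ~~ Ek Ak f n [::])).

Lemma depN_Ek n (a : seq A) (Q : pred bool) : depN (fun f => Q (Ek Ak f n a)) (size a + n * k).
Proof.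
move=> f g H; congr Q; apply: Ek_dep => c Hc; apply: H.
by rewrite size_cat ltn_add2l.
Qed.

Lemma xn_ge0 n : 0 <= xn n.
Proof. exact: (Pr_ge0 P). Qed.

Lemma xn_le1 n : xn n <= 1.
Proof. by apply: (Pr_le1 P); apply: (depN_meas (depN_Ek (n:=n) (a:=[::]) negb)). Qed.
Lemma Pr_Ek_eq n (a : seq A) (b : bool) :
  PR (ev (fun f => Ek Ak f n a == b)) = if b then 1 - xn n else xn n.
Proof.
have -> : ev (fun f => Ek Ak f n a == b) =
          ev (fun f => (fun f' => Ek Ak f' n [::] == b) (fun c => f (a ++ c))).
  by apply: ev_ext => f; rewrite Ek_shift.
rewrite (Pr_shift Wmeas Wid Windep (S := wsl (n * k)) (Phi := fun f' => Ek Ak f' n [::] == b) a); last 2 first.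
- exact: wsl_uniq.
- apply: depN_dep; exact: (depN_Ek (n:=n) (a:=[::]) (fun x => x == b)).
case: b.
  rewrite (ev_ext (Psi := fun f => ~~ ~~ Ek Ak f n [::])); last by move=> f; rewrite eqb_id negbK.
  rewrite evC (Pr_compl P) //; apply: (depN_meas (depN_Ek (n:=n) (a:=[::]) negb)).
by rewrite /xn; congr Pr; apply: ev_ext => f; rewrite eqbF_neg.
Qed.

Definition Yset l f n : {set l.-tuple A} := [set t : l.-tuple A | Ek Ak f n (val t)].

Lemma Pr_Yset l n (D : {set l.-tuple A}) :
  PR (ev (fun f => Yset l f n == D)) = wt (fun _ => xn n) D.
Proof.
have -> : ev (fun f => Yset l f n == D) =
   ev (fun f => all (fun t => (fun t f => Ek Ak f n (val t) == (t \in D)) t f) (index_enum (l.-tuple A))).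
  apply: ev_ext => f; apply/eqP/allP.
    by move=> <- t _; rewrite inE.
  by move=> H; apply/setP=> t; rewrite inE; apply/eqP/H; rewrite mem_index_enum.
rewrite (Pr_indep_list Wmeas Wid Windep (S := fun t : l.-tuple A => map (cat (val t)) (wsl (n * k)))).
- rewrite /wt; apply: eq_bigr => t _; by rewrite Pr_Ek_eq.
- exact: index_enum_uniq.
- by move=> t; rewrite map_inj_uniq ?wsl_uniq //; apply: cat_inj.
- move=> t f g H /=; congr (_ == _); apply: Ek_dep => c Hc; apply: H; apply: map_f; by rewrite mem_wsl.
- move=> t t' a _ _ tt' /mapP[c _ ->]; apply/mapP => -[c' _] /eqP.
  rewrite eqseq_cat ?size_tuple // => /andP[/eqP /val_inj tt _].
  by rewrite tt eqxx in tt'.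
Qed.

Lemma key l n (Psi : {set l.-tuple A} -> {set l.-tuple A} -> bool) :
  PR (ev (fun f => Psi (Tgen f l) (Yset l f n))) =
  \sum_(D : {set l.-tuple A}) wt (fun _ => xn n) D * PR (ev (fun f => Psi (Tgen f l) D)).
Proof.
have dZ : forall f g, (forall c, (size c < l + n * k)%N -> f c = g c) ->
    (Tgen f l, Yset l f n) = (Tgen g l, Yset l g n).
  move=> f g H; congr pair.
    apply/eqP; rewrite (depN_Tgen (l:=l) (fun T => T == Tgen g l) (f:=f) (g:=g)) ?eqxx // => c cl.
    by apply: H; apply: (leq_trans cl); rewrite leq_addr.
  apply/setP=> t; rewrite !inE; apply: Ek_dep => c Hc; apply: H.
  by rewrite size_cat size_tuple ltn_add2l.
rewrite (Pr_sumZ (Zf := fun f => (Tgen f l, Yset l f n)) (fun p => Psi p.1 p.2) dZ).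
rewrite -(pair_bigA _ (fun T D => (Psi T D)%:R * PR (ev (fun f => (Tgen f l, Yset l f n) == (T, D))))) /=.
rewrite exchange_big /=; apply: eq_bigr => D _.
rewrite (Pr_sumZ (Zf := fun f => Tgen f l) (N := l) (fun T => Psi T D)); last first.
  move=> f g H; apply/eqP; by rewrite (depN_Tgen (l:=l) (fun T => T == Tgen g l) (f:=f) (g:=g)) ?eqxx.
rewrite big_distrr /=; apply: eq_bigr => T _.
have -> : ev (fun f => (Tgen f l, Yset l f n) == (T, D)) =
          ev (fun f => (Tgen f l == T) && (Yset l f n == D)).
  by apply: ev_ext => f; rewrite xpair_eqE.
rewrite (Pr_indep2 Wmeas Wid Windep (S := wsl l)
   (S' := undup (flatten [seq map (cat (val t)) (wsl (n * k)) | t <- index_enum (l.-tuple A)]))).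
- rewrite Pr_Yset; ring.
- exact: wsl_uniq.
- exact: undup_uniq.
- move=> a; rewrite mem_wsl mem_undup => al; apply/flattenP => -[s /mapP[t _ ->] /mapP[c _ ac]].
  by move: al; rewrite ac size_cat size_tuple ltnNge leq_addr.
- exact: depN_dep (depN_Tgen (fun X => X == T)).
- move=> f g H; congr (_ == D); apply/setP=> t; rewrite !inE; apply: Ek_dep => c Hc; apply: H.
  rewrite mem_undup; apply/flattenP; exists (map (cat (val t)) (wsl (n * k))).
    by apply: map_f; rewrite mem_index_enum.
  by apply: map_f; rewrite mem_wsl.
Qed.


Lemma xn0 : xn 0 = 0.
Proof.
rewrite /xn -(Pr_set0 P); congr Pr; apply/seteqP; split=> w //.
Qed.

Lemma Ek_up f n : Ek Ak f n.+1 [::] = upclosure_mem Ak (Tgen f k :&: Yset k f n).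
Proof.
rewrite /= /upclosure_mem; apply: eq_existsb => X; congr (_ && _).
apply/forall_inP/fintype.subsetP => H t tX.
  by have /andP[h1 h2] := H t tX; rewrite !inE /inGW h1 h2.
by have := H t tX; rewrite !inE /inGW => /andP[-> ->].
Qed.

Definition phiup (D : {set k.-tuple A}) : R :=
  PR (ev (fun f => ~~ upclosure_mem Ak (Tgen f k :&: D))).

Lemma gfunE (s : R) : gfun P W Ak s = Fw (fun _ => s) phiup.
Proof. by rewrite /gfun /Fw; apply: eq_bigr => D _; rewrite wt_const. Qed.

Lemma xn_rec n : xn n.+1 = gfun P W Ak (xn n).
Proof.
rewrite gfunE /xn (ev_ext (Psi := fun f =>
   (fun T D => ~~ upclosure_mem Ak (T :&: D)) (Tgen f k) (Yset k f n))); last first.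
  by move=> f; rewrite Ek_up.
by rewrite (key n (fun T D => ~~ upclosure_mem Ak (T :&: D))).
Qed.

Lemma phiup_anti (D D' : {set k.-tuple A}) : D \subset D' -> phiup D' <= phiup D.
Proof.
move=> DD'; apply: (Pr_le P).
- exact: depN_meas (depN_Tgen (fun T => ~~ upclosure_mem Ak (T :&: D'))).
- exact: depN_meas (depN_Tgen (fun T => ~~ upclosure_mem Ak (T :&: D))).
move=> w; rewrite /evt /=; apply: contra => /existsP[X /andP[XA XT]].
apply/existsP; exists X; rewrite XA /=; apply: (fintype.subset_trans XT).
by apply: finset.setIS.
Qed.

Lemma gfun_mono (x y : R) : 0 <= x -> x <= y -> y <= 1 -> gfun P W Ak x <= gfun P W Ak y.
Proof.
move=> x0 xy y1; rewrite !gfunE; apply: Fw_mono.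
- by move=> t; rewrite x0 (le_trans xy y1).
- by move=> t; rewrite (le_trans x0 xy) y1.
- by move=> t.
- exact: phiup_anti.
Qed.

Lemma xn_bound (s : R) : 0 <= s <= 1 -> gfun P W Ak s <= s -> forall n, xn n <= s.
Proof.
case/andP=> s0 s1 gs; elim=> [|n IH]; first by rewrite xn0.
rewrite xn_rec; apply: le_trans gs; apply: gfun_mono => //; exact: xn_ge0.
Qed.

Lemma depN_TY l n (Q : {set l.-tuple A} -> {set l.-tuple A} -> bool) :
  depN (fun f => Q (Tgen f l) (Yset l f n)) (l + n * k).
Proof.
move=> f g H; congr Q.
  apply/eqP; rewrite (depN_Tgen (l:=l) (fun T => T == Tgen g l) (f:=f) (g:=g)) ?eqxx // => c cl.
  by apply: H; apply: (leq_trans cl); rewrite leq_addr.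
apply/setP=> t; rewrite !inE; apply: Ek_dep => c Hc; apply: H.
by rewrite size_cat size_tuple ltn_add2l.
Qed.

Definition Jev l n := ev (fun f => (Tgen f l != finset.set0) && (Tgen f l :&: Yset l f n == finset.set0)).

Lemma Jev_bound l n (s : R) : 0 <= s <= 1 -> xn n <= s ->
  PR (Jev l n) <= \sum_(D : {set l.-tuple A}) wt (fun _ => s) D *
     PR (ev (fun f => (Tgen f l != finset.set0) && (Tgen f l :&: D == finset.set0))).
Proof.
case/andP=> s0 s1 xs.
rewrite /Jev (key n (fun T D => (T != finset.set0) && (T :&: D == finset.set0))).
apply: (Fw_mono (phi := fun D => PR (ev (fun f => (Tgen f l != finset.set0) && (Tgen f l :&: D == finset.set0))))).
- by move=> t; rewrite xn_ge0 xn_le1.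
- by move=> t; rewrite s0 s1.
- by move=> t.
move=> D D' DD'; apply: (Pr_le P).
- exact: depN_meas (depN_Tgen (fun T => (T != finset.set0) && (T :&: D' == finset.set0))).
- exact: depN_meas (depN_Tgen (fun T => (T != finset.set0) && (T :&: D == finset.set0))).
move=> w; rewrite /evt /= => /andP[-> /eqP H]; apply/eqP; apply/setP=> t.
rewrite !inE; apply/negP => /andP[tT tD].
have : t \in Tgen (Wf W w) l :&: D' by rewrite finset.in_setI /Tgen inE tT (fintype.subsetP DD').
by rewrite H inE.
Qed.

End GWProb.


Lemma cvg_eps (R : realType) (u : nat -> R) (l : R) : u @ \oo --> l ->
  forall eps : R, 0 < eps -> exists N, forall n, (N <= n)%N -> `|l - u n| < eps.
Proof.
move=> /cvgrPdist_lt H eps e0; have := H eps e0.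
case=> N _ HN; exists N => n nN; exact: HN.
Qed.

Lemma lim_le_real (R : realType) (u : nat -> R) (l c : R) : u @ \oo --> l ->
  (forall n, u n <= c) -> l <= c.
Proof.
move=> cu uc; rewrite leNgt; apply/negP => cl.
have lc : 0 < l - c by rewrite subr_gt0.
have [N HN] := @cvg_eps R u l cu (l - c) lc.
have := HN N (leqnn N); have := uc N.
move: (u N) => x; rewrite ltr_norml; lra.
Qed.

Section Final.
Variables (R : realType) (d : measure_display) (Omega : measurableType d)
  (P : probability Omega R) (A : finType) (W : seq A -> Omega -> {set A}).
Hypothesis Wmeas : forall (a : seq A) (X : {set A}), measurable [set w | W a w = X].
Hypothesis Wid : forall (a : seq A) (X : {set A}),
      P [set w | W a w = X] = P [set w | W [::] w = X].
Hypothesis Windep : forall (s : seq (seq A)) (Xs : seq A -> {set A}), uniq s ->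
      Pr P [set w | all (fun a => W a w == Xs a) s] =
      \prod_(a <- s) Pr P [set w | W a w = Xs a].

Local Notation ev := (evt W).
Local Notation PR := (Pr P).

Lemma extinct_iff (f : seq A -> {set A}) : extinct f <-> exists n, Tgen f n == finset.set0.
Proof.
split=> -[n Hn]; exists n.
  apply/eqP/setP=> t; rewrite !inE; apply/negbTE; apply: Hn; exact: size_tuple.
move=> a sa; have sz : size a == n by apply/eqP.
have := Hn; move/eqP/setP => /(_ (Tuple sz)); by rewrite !inE => ->.
Qed.

Lemma Tgen_mono (f : seq A -> {set A}) n m : (n <= m)%N ->
  Tgen f n == finset.set0 -> Tgen f m == finset.set0.
Proof.
move=> nm /eqP /setP Hn; apply/eqP/setP=> t; rewrite !inE; apply/negP => Ht.
have sz : size (take n (val t)) == n by rewrite size_take size_tuple; case: ifP => // /negbT; rewrite -leqNgt => mn; rewrite eqn_leq mn nm.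
have := Hn (Tuple sz); rewrite !inE /=.
by rewrite inGW_prefix // size_tuple.
Qed.

Definition Tz n := ev (fun f => Tgen f n == finset.set0).

Lemma Tz_meas n : measurable (Tz n).
Proof. have := depN_meas Wmeas (depN_Tgen (l:=n) (fun T => T == finset.set0)). done. Qed.

Lemma eps_bound l (s : R) (Bl : {set {set l.-tuple A}}) :
  (forall X, X \in Bl -> X != finset.set0) -> 0 <= s <= 1 ->
  \sum_(D : {set l.-tuple A}) wt (fun _ => s) D *
     PR (ev (fun f => (Tgen f l != finset.set0) && (Tgen f l :&: D == finset.set0)))
  <= gfun P W Bl s - PR (Tz l).
Proof.
move=> Bne /andP[s0 s1].
have s01 : in01 (fun _ : l.-tuple A => s) by move=> t; rewrite s0 s1.
have E1 : forall D : {set l.-tuple A},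
  PR (ev (fun f => (Tgen f l != finset.set0) && (Tgen f l :&: D == finset.set0))) =
  PR (ev (fun f => Tgen f l :&: D == finset.set0)) - PR (Tz l).
  move=> D; apply/eqP; rewrite eq_sym subr_eq; apply/eqP.
  rewrite -(PrU P); last first.
  - apply/seteqP; split=> w //=; rewrite /evt /= => -[/andP[/negP h _] h'].
    exact: h.
  - exact: Tz_meas.
  - by have := depN_meas Wmeas (depN_Tgen (l:=l) (fun T => (T != finset.set0) && (T :&: D == finset.set0))).
  congr Pr; apply/seteqP; split=> w; rewrite /evt /=.
    case E: (Tgen _ l == finset.set0) => /= H; [by right|by left].
  case=> [/andP[_ ->]//|/eqP ->]; by rewrite finset.set0I.
under eq_bigr do rewrite E1 mulrBr.
rewrite sumrB -big_distrl /= sum_wt // mul1r lerD2r.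
rewrite /gfun; apply: ler_sum => D _; rewrite -wt_const; apply: ler_wpM2l.
  exact: wt_ge0.
apply: (Pr_le P).
- by have := depN_meas Wmeas (depN_Tgen (l:=l) (fun T => T :&: D == finset.set0)).
- by have := depN_meas Wmeas (depN_Tgen (l:=l) (fun T => ~~ upclosure_mem Bl (T :&: D))).
move=> w; rewrite /evt /= => /eqP ->; apply/existsP => -[X /andP[XB]].
by rewrite finset.subset0 => /eqP XE; move: (Bne X XB); rewrite XE eqxx.
Qed.


Lemma main_thm (Acal : forall k : nat, {set {set k.-tuple A}}) :
  (forall (k : nat) (X : {set k.-tuple A}), X \in Acal k -> X != finset.set0) ->
  (forall s : R, 0 < s < 1 ->
      (fun k : nat => gfun P W (Acal k) s) @ \oo -->
      Pr P [set w | extinct (fun a => W a w)]) ->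
  exists K : nat, forall k : nat, (K < k)%N ->
    {ae P, forall w, ~ extinct (fun a => W a w) ->
       infinite_set [set v : seq (k.-tuple A) |
          @Tcomp A (fun a => W a w) k v /\
          has_subtree (Acal k) (desc (@Tcomp A (fun a => W a w) k) v)]}.
Proof.
move=> Hne Hconv.
set Ext := [set w | extinct (fun a => W a w)].
have ExtE : Ext = \bigcup_n Tz n.
  apply/seteqP; split=> w /=.
    by case/extinct_iff => n Hn; exists n.
  by case=> n _ Hn; apply/extinct_iff; exists n.
have mExt : measurable Ext by rewrite ExtE; apply: bigcup_measurable => n _; exact: Tz_meas.
have cTz : (fun n => PR (Tz n)) @ \oo --> PR Ext.
  apply: (fine_cvg (f := fun n => P (Tz n))); rewrite -(PrE P mExt) ExtE.
  apply: nondecreasing_cvg_mu.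
  - exact: Tz_meas.
  - by rewrite -ExtE.
  - move=> n m nm; apply/asboolP => w; rewrite /Tz /evt /=; exact: Tgen_mono.
set q := PR Ext.
have q0 : 0 <= q by exact: Pr_ge0.
have q1 : q <= 1 by exact: Pr_le1.
case: (ltP q 1) => [qlt1|qge1]; last first.
  exists 0%N => k _.
  have qE : q = 1 by apply/le_anti; rewrite q1 qge1.
  exists (~` Ext); split; first exact: measurableC.
    by rewrite (probability_setC P mExt) (PrE P mExt) -/q qE subee.
  by move=> w /= H; apply: contra_not H => Hw Hn; exfalso; exact: Hn Hw.
pose s := (1 + q) / 2.
have s0 : 0 < s by rewrite /s divr_gt0 //; lra.
have s1 : s < 1 by rewrite /s ltr_pdivrMr //; lra.
have qs : q < s by rewrite /s ltr_pdivlMr //; lra.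
clearbody s.
have s01 : 0 < s < 1 by rewrite s0 s1.
have sq : 0 < s - q by rewrite subr_gt0.
have [K HK] := cvg_eps (Hconv s s01) sq.
exists K => k Kk.
have gk : gfun P W (Acal k) s <= s.
  have := HK k (ltnW Kk); rewrite ltr_norml -/Ext -/q => /andP[h _]; lra.
have xb : forall n, xn P W (Acal k) n <= s.
  by apply: (xn_bound Wmeas Wid Windep) => //; rewrite !ltW.
have k1 : (0 < k)%N by apply: leq_ltn_trans Kk.
have kL : forall L, (L <= k * L)%N by move=> L; rewrite leq_pmull.
pose J L n := Jev W (Acal k) (k * L) n.
pose Jall L := \bigcup_n J L n.
pose Nm m := \bigcap_(L in [set L | (m <= L)%N]) Jall L.
have mJ : forall L n, measurable (J L n).
  move=> L n; have := depN_meas Wmeas (depN_TY (Acal k) (l := k * L) (n := n)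
     (fun T Y => (T != finset.set0) && (T :&: Y == finset.set0))); done.
have mJall : forall L, measurable (Jall L) by move=> L; apply: bigcup_measurable => n _; exact: mJ.
have mNm : forall m, measurable (Nm m).
  by move=> m; apply: bigcap_measurable => [|L _]; [exists m => /=|exact: mJall].
have cJ : forall L, (fun n => PR (J L n)) @ \oo --> PR (Jall L).
  move=> L; apply: (fine_cvg (f := fun n => P (J L n))); rewrite -(PrE P (mJall L)).
  apply: nondecreasing_cvg_mu; [exact: mJ|exact: mJall|].
  move=> n m nm; apply/asboolP => w; rewrite /J /Jev /evt /= => /andP[-> /eqP H] /=.
  apply/eqP/setP=> t; rewrite !inE; apply/negP => /andP[tT tY].
  have : t \in Tgen (Wf W w) (k * L) :&: Yset (Acal k) (k * L) (Wf W w) n.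
    by rewrite !inE tT /=; apply: Ek_monoW tY.
  by rewrite H inE.
have bJall : forall L, PR (Jall L) <= gfun P W (Acal (k * L)) s - PR (Tz (k * L)).
  move=> L; apply: (lim_le_real (cJ L)) => n.
  apply: le_trans (Jev_bound Wmeas Wid Windep (k * L) _ (xb n)) _; first by rewrite !ltW.
  apply: eps_bound; first exact: Hne.
  by rewrite !ltW.
have nNm : forall m, P (Nm m) = 0%E.
  move=> m; rewrite (PrE P (mNm m)); congr EFin; apply/le_anti; rewrite Pr_ge0 andbT.
  rewrite leNgt; apply/negP => e0; set e := PR (Nm m) in e0.
  have e2 : 0 < e / 2 by rewrite divr_gt0.
  have [N1 H1] := cvg_eps (Hconv s s01) e2.
  have [N2 H2] := cvg_eps cTz e2.
  pose L := (m + N1 + N2)%N.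
  have hN1 : (N1 <= k * L)%N by apply: leq_trans (kL L); rewrite /L -addnA addnCA leq_addr.
  have hN2 : (N2 <= k * L)%N by apply: leq_trans (kL L); rewrite /L leq_addl.
  have hm : (m <= L)%N by rewrite /L -addnA leq_addr.
  have := H1 _ hN1; have := H2 _ hN2; rewrite -/Ext -/q !ltr_norml => /andP[_ a1] /andP[a2 _].
  have := bJall L.
  have : e <= PR (Jall L) by apply: (Pr_le P) => // w; apply; exact: hm.
  have e22 : e / 2 + e / 2 = e by rewrite -splitr.
  lra.
apply: (negligibleS (A := \bigcup_m Nm m)); last first.
  by apply: negligible_bigcup => m; exists (Nm m); split; [exact: mNm|exact: nNm|].
move=> w /= H.
have Hn : ~ extinct (W^~ w) by move=> He; apply: H => He'; exfalso; exact: He' He.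
have Hf : finite_set [set v : seq (k.-tuple A) | @Tcomp A (fun a => W a w) k v /\
          has_subtree (Acal k) (desc (@Tcomp A (fun a => W a w) k) v)].
  by apply: contrapT => Hi; apply: H => _; exact: Hi.
case/finite_seqP: Hf => sv Hsq.
exists (\max_(v <- sv) size v).+1 => // L /= mL.
pose f := Wf W w.
have Tne : Tgen f (k * L) != finset.set0.
  by apply/negP => H0; apply: Hn; apply/extinct_iff; exists (k * L)%N.
have each : forall t, t \in enum (Tgen f (k * L)) -> exists n, ~~ Ek (Acal k) f n (val t).
  move=> t; rewrite mem_enum => tT; apply: contrapT => Hall.
  have gt : good (Acal k) f (val t).
    move=> n; apply: contrapT => h; apply: Hall; exists n; exact/negP.
  have [v [szv fv]] := split_word (size_tuple t).
  have Fv : [set v : seq (k.-tuple A) | @Tcomp A (fun a => W a w) k v /\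
          has_subtree (Acal k) (desc (@Tcomp A (fun a => W a w) k) v)] v.
    have Tv : @Tcomp A f k v by rewrite /Tcomp fv; move: tT; rewrite inE.
    split=> //.
    have -> : desc (@Tcomp A (fun a => W a w) k) v =
              (fun b : seq (k.-tuple A) => inGW_from f (val t) (flatten (map val b))).
      by apply: funext => b; rewrite desc_Tcomp Tv fv.
    exact: good_subtree.
  move: Fv; rewrite Hsq /= => vsq.
  have : (size v <= \max_(v <- sv) size v)%N.
    by rewrite (big_rem v vsq) /= leq_maxl.
  by rewrite szv leqNgt (leq_trans mL) // leqnn.
have [n Hnn] := fin_unif (Q := fun n t => ~~ Ek (Acal k) f n (val t))
   (fun n m t nm => contra (Ek_monoW nm)) each.
exists n => //.
rewrite /J /Jev /evt /= Tne /=; apply/eqP/setP => t; rewrite !inE.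
apply/negP => /andP[tT tE].
have := Hnn t; rewrite mem_enum /Tgen inE; move=> /(_ tT); by rewrite tE.
Qed.

End Final.


Unset Implicit Arguments. Set Strict Implicit.

Theorem lemma4p4 (R : realType) (d : measure_display) (Omega : measurableType d)
  (P : probability Omega R) (A : finType) (W : seq A -> Omega -> {set A})
  (Acal : forall k : nat, {set {set k.-tuple A}}) :
  (* each W_a is a random subset of A *)
  (forall (a : seq A) (X : {set A}), measurable [set w | W a w = X]) ->
  (* the W_a are identically distributed (copies of W := W_[::]) *)
  (forall (a : seq A) (X : {set A}),
      P [set w | W a w = X] = P [set w | W [::] w = X]) ->
  (* the W_a are mutually independent *)
  (forall (s : seq (seq A)) (Xs : seq A -> {set A}), uniq s ->
      Pr P [set w | all (fun a => W a w == Xs a) s] =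
      \prod_(a <- s) Pr P [set w | W a w = Xs a]) ->
  (* P(i \in W) > 0 for every i *)
  (forall i : A, 0 < Pr P [set w | i \in W [::] w]) ->
  (* supercritical: E|W| > 1 *)
  1 < \sum_(X : {set A}) #|X|%:R * Pr P [set w | W [::] w = X] ->
  (* each A_k is a nonempty collection of nonempty subsets of A^k *)
  (forall k : nat, Acal k != finset.set0) ->
  (forall (k : nat) (X : {set k.-tuple A}), X \in Acal k -> X != finset.set0) ->
  (* g_{A_k}(s) -> P(extinction) for every s in (0,1) *)
  (forall s : R, 0 < s < 1 ->
      (fun k : nat => gfun P W (Acal k) s) @ \oo -->
      Pr P [set w | extinct (fun a => W a w)]) ->
  exists K : nat, forall k : nat, (K < k)%N ->
    {ae P, forall w, ~ extinct (fun a => W a w) ->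
       infinite_set [set v : seq (k.-tuple A) |
          @Tcomp A (fun a => W a w) k v /\
          has_subtree (Acal k) (desc (@Tcomp A (fun a => W a w) k) v)]}.
Proof.
move=> Wmeas Wid Windep _ _ _ Hne Hconv.
exact: (main_thm Wmeas Wid Windep Hne Hconv).
Qed.
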